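(* Let $A,B$ be commutative rings, $f:A\to B$ a ring homomorphism, $J$ an ideal of $B$, $\mathfrak a$ an ideal of $A$, $\mathfrak p$ a prime ideal of $A$ and $\mathfrak q$ a prime ideal of $B$. Then (1) $\mathfrak a^e\subseteq\mathfrak p^{\prime_f}$ if and only if $\mathfrak a\subseteq\mathfrak p$; (2) $\mathfrak a^e\subseteq\overline{\mathfrak q}^f$ if and only if $f(\mathfrak a)\subseteq\mathfrak q$.
   Context: $A\bowtie^fJ=\{(a,f(a)+j): a\in A,\ j\in J\}\subseteq A\times B$; $\iota_A(x)=(x,f(x))$ and $\mathfrak a^e=\iota_A(\mathfrak a)(A\bowtie^fJ)$. For a prime $\mathfrak p$ of $A$, $\mathfrak p^{\prime_f}=\{(p,f(p)+j): p\in\mathfrak p,\ j\in J\}$; for a prime $\mathfrak q$ of $B$, $\overline{\mathfrak q}^f=\{(a,f(a)+j): a\in A,\ j\in J,\ f(a)+j\in\mathfrak q\}$. *)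

(* Defs.v *)
From HB Require Import structures.
From mathcomp Require Import all_boot all_algebra.
Set Implicit Arguments. Unset Strict Implicit. Unset Printing Implicit Defensive.
Import GRing.Theory.
Local Open Scope ring_scope.

Definition is_ideal (R : comNzRingType) (I : R -> Prop) : Prop :=
  [/\ I 0, (forall x y, I x -> I y -> I (x + y)) & (forall r x, I x -> I (r * x))].

Definition is_prime_ideal (R : comNzRingType) (P : R -> Prop) : Prop :=
  [/\ is_ideal P, ~ P 1 & (forall x y, P (x * y) -> P x \/ P y)].

Definition subset_of (T : Type) (X Y : T -> Prop) : Prop := forall x, X x -> Y x.

Section Dup.
Variables (A B : comNzRingType) (f : {rmorphism A -> B}).

Definition amalg (J : B -> Prop) : (A * B)%type -> Prop :=
  fun z => exists a j, J j /\ z = (a, f a + j).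

Definition iotaA (x : A) : (A * B)%type := (x, f x).

(* 𝔞^e = ι_A(𝔞)(A ⋈^f J): the ideal of A ⋈^f J generated by ι_A(𝔞),
   i.e. all finite sums Σ r_i ι_A(a_i), r_i ∈ A ⋈^f J, a_i ∈ 𝔞. *)
Definition ext_ideal (J : B -> Prop) (a : A -> Prop) : (A * B)%type -> Prop :=
  fun z => exists (n : nat) (r : 'I_n -> (A * B)%type) (x : 'I_n -> A),
    (forall i, amalg J (r i)) /\ (forall i, a (x i)) /\
    z = \sum_(i < n) r i * iotaA (x i).

Definition prime_prime_f (J : B -> Prop) (p : A -> Prop) : (A * B)%type -> Prop :=
  fun z => exists x j, p x /\ J j /\ z = (x, f x + j).

Definition qbar_f (J : B -> Prop) (q : B -> Prop) : (A * B)%type -> Prop :=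
  fun z => exists x j, J j /\ q (f x + j) /\ z = (x, f x + j).

End Dup.

(* Main.v *)
Require Import Defs.
From HB Require Import structures.
From mathcomp Require Import all_boot all_algebra.
Local Open Scope ring_scope.
Import GRing.Theory.

Lemma ideal_sum (R : comNzRingType) (I : R -> Prop) n (F : 'I_n -> R) :
  is_ideal I -> (forall i, I (F i)) -> I (\sum_(i < n) F i).
Proof.
move=> [I0 ID _] HF.
elim/big_rec: _ => // i x _ Hx; exact: ID.
Qed.

Lemma ext_decomp (A B : comNzRingType) (f : {rmorphism A -> B})
  (J : B -> Prop) (a : A -> Prop) z :
  is_ideal J -> ext_ideal f J a z ->
  exists n (s : 'I_n -> A) (x : 'I_n -> A) t,
    (forall i, a (x i)) /\ J t /\
    z = (\sum_(i < n) s i * x i, f (\sum_(i < n) s i * x i) + t)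
    /\ exists c : 'I_n -> B, z.2 = \sum_(i < n) c i * f (x i).
Proof.
move=> HJ [n [r [x [Hr [Hx ->]]]]].
have E1 : (\sum_(i < n) r i * iotaA f (x i)).1 = \sum_(i < n) (r i).1 * x i.
  by elim/big_rec2: _ => // i y1 y2 _ <-.
have E2 : (\sum_(i < n) r i * iotaA f (x i)).2 = \sum_(i < n) (r i).2 * f (x i).
  by elim/big_rec2: _ => // i y1 y2 _ <-.
exists n, (fun i => (r i).1), x, (\sum_(i < n) ((r i).2 - f (r i).1) * f (x i)).
have Hs : \sum_(i < n) (r i).2 * f (x i) =
   \sum_(i < n) f ((r i).1) * f (x i) + \sum_(i < n) ((r i).2 - f (r i).1) * f (x i).
  rewrite -big_split /=; apply: eq_bigr => i _.
  by rewrite -mulrDl addrC subrK.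
split=> //; split.
  apply: ideal_sum => // i.
  have [b [j [Jj ->]]] := Hr i.
  case: HJ => _ _ HM; rewrite /=.
  rewrite addrC addKr mulrC; exact: HM.
split; last by exists (fun i => (r i).2); rewrite E2.
case: (\sum_(i < n) r i * iotaA f (x i)) E1 E2 => u v /= -> ->.
by rewrite Hs rmorph_sum; congr (_, _ + _); apply: eq_bigr => i _; rewrite rmorphM.
Qed.

Arguments ext_decomp {A B f J a z}.

Theorem lemma4p3 (A B : comNzRingType) (f : {rmorphism A -> B})
  (J : B -> Prop) (a p : A -> Prop) (q : B -> Prop) :
  is_ideal J -> is_ideal a -> is_prime_ideal p -> is_prime_ideal q ->
  (subset_of (ext_ideal f J a) (prime_prime_f f J p) <-> subset_of a p) /\
  (subset_of (ext_ideal f J a) (qbar_f f J q) <->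
     (forall x, a x -> q (f x))).
Proof.
move=> HJ Ha [Hp _ _] [Hq _ _].
have J0 : J 0 by case: HJ.
have Hin : forall x, a x -> ext_ideal f J a (iotaA f x).
  move=> x ax; exists 1%N, (fun _ => 1), (fun _ => x); split.
    by move=> i; exists 1, 0; split => //; rewrite rmorph1 addr0.
  by split => //; rewrite big_ord1 mul1r.
split; split.
- move=> H x ax; have [y [j [py [_ E]]]] := H _ (Hin x ax).
  by case: E => ->.
- move=> H z /(ext_decomp HJ) [n [s [x [t [Hx [Jt [-> _]]]]]]].
  exists (\sum_(i < n) s i * x i), t; split; last by split.
  apply: ideal_sum => // i; case: Hp => _ _ HM; apply: HM; exact: H.
- move=> H x ax; have [y [j [_ [qy E]]]] := H _ (Hin x ax).
  by case: E => -> ->.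
- move=> H z /(ext_decomp HJ) [n [s [x [t [Hx [Jt [Ez E2]]]]]]].
  exists (\sum_(i < n) s i * x i), t; split => //; split => //.
  have -> : f (\sum_(i < n) s i * x i) + t = z.2 by rewrite Ez.
  case: E2 => c ->; apply: ideal_sum => // i; case: Hq => _ _ QM.
  apply: QM; exact: H.
Qed.
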